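(* Let $\alpha,\beta,\gamma,\delta\in\mathbb{R}$ with $\alpha+\delta\neq 0$ and $\alpha\gamma-\beta\delta=0$, and let $G_6$ be the connected, simply connected Lie group whose Lie algebra $\mathfrak{g}_6$ has a basis $\{e_1,e_2,e_3\}$ with $[e_1,e_2]=\alpha e_2+\beta e_3$, $[e_1,e_3]=\gamma e_2+\delta e_3$, $[e_2,e_3]=0$, equipped with the left-invariant Lorentzian metric $g$ for which $\{e_1,e_2,e_3\}$ is pseudo-orthonormal with $e_3$ timelike, and with the product structure $J$. Let $\lambda_0,c\in\mathbb{R}$. Then there exists a derivation $D$ of $\mathfrak{g}_6$ with $\widetilde{\mathrm{Ric}}^1=(s^1\lambda_0+c)\mathrm{Id}+D$ (i.e. $(G_6,g,J)$ is an algebraic Schouten soliton associated to the Kobayashi–Nomizu connection $\nabla^1$) if and only if one of the following holds: (i) $\alpha=\beta=0$, $\delta\neq0$ and $c=0$; (ii) $\alpha\neq0$, $\beta=\gamma=0$, $\alpha+\delta\neq0$ and $c=-\alpha^2+2\alpha^2\lambda_0$.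
   Context: Pseudo-orthonormal means $g(e_1,e_1)=g(e_2,e_2)=1$, $g(e_3,e_3)=-1$, $g(e_i,e_j)=0$ for $i\neq j$; left-invariant tensors are identified with their values on $\mathfrak{g}$. $\nabla$ is the Levi-Civita connection of $g$. The product structure $J$ is the left-invariant endomorphism with $Je_1=e_1$, $Je_2=e_2$, $Je_3=-e_3$. The canonical connection is $\nabla^0_XY=\nabla_XY-\frac12(\nabla_XJ)JY$, and the Kobayashi–Nomizu connection is $\nabla^1_XY=\nabla^0_XY-\frac14[(\nabla_YJ)JX-(\nabla_{JY}J)X]$. For $k=0,1$: $R^k(X,Y)Z=\nabla^k_X\nabla^k_YZ-\nabla^k_Y\nabla^k_XZ-\nabla^k_{[X,Y]}Z$; $\rho^k(X,Y)=-g(R^k(X,e_1)Y,e_1)-g(R^k(X,e_2)Y,e_2)+g(R^k(X,e_3)Y,e_3)$; $\widetilde\rho^k(X,Y)=\frac12(\rho^k(X,Y)+\rho^k(Y,X))$; $\widetilde{\mathrm{Ric}}^k$ is defined by $\widetilde\rho^k(X,Y)=g(\widetilde{\mathrm{Ric}}^k(X),Y)$; and $s^k=\widetilde\rho^k(e_1,e_1)+\widetilde\rho^k(e_2,e_2)-\widetilde\rho^k(e_3,e_3)$. A derivation of $\mathfrak{g}$ is a linear map $D$ with $D[X,Y]=[DX,Y]+[X,DY]$. $(G,g,J)$ is an algebraic Schouten soliton associated to $\nabla^k$ (with real constants $\lambda_0,c$) if $\widetilde{\mathrm{Ric}}^k=(s^k\lambda_0+c)\mathrm{Id}+D$ for some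 derivation $D$. *)

(* Defs.v *)
(* Left-invariant objects on G_6 are identified with their
   values on the Lie algebra g_6 = R^3 (column vectors), basis e1,e2,e3 =
   ev i1, ev i2, ev i3. *)
From HB Require Import structures.
From mathcomp Require Import all_boot all_order all_algebra.
From mathcomp Require Import reals.
Set Implicit Arguments.
Unset Strict Implicit.
Unset Printing Implicit Defensive.
Import Order.TTheory GRing.Theory Num.Theory.
Local Open Scope ring_scope.

Section G6.
Variable R : realType.
Variables (al be ga de : R).

Definition vec := 'cV[R]_3.
Definition i1 : 'I_3 := inord 0.
Definition i2 : 'I_3 := inord 1.
Definition i3 : 'I_3 := inord 2.
Definition ev (i : 'I_3) : vec := delta_mx i 0.
Definition co (X : vec) (i : 'I_3) : R := X i 0.

(* bilinear, antisymmetric extension of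
   [e1,e2] = al e2 + be e3, [e1,e3] = ga e2 + de e3, [e2,e3] = 0 *)
Definition br (X Y : vec) : vec :=
  (co X i1 * co Y i2 - co X i2 * co Y i1) *: (al *: ev i2 + be *: ev i3)
  + (co X i1 * co Y i3 - co X i3 * co Y i1) *: (ga *: ev i2 + de *: ev i3)
  + (co X i2 * co Y i3 - co X i3 * co Y i2) *: (0 : vec).

Definition eps (k : 'I_3) : R := if k == i3 then -1 else 1.
Definition g (X Y : vec) : R := \sum_k eps k * co X k * co Y k.

Definition J (X : vec) : vec := co X i1 *: ev i1 + co X i2 *: ev i2 - co X i3 *: ev i3.

(* Levi-Civita connection on left-invariant fields (Koszul formula) *)
Definition koszul (X Y Z : vec) : R :=
  (g (br X Y) Z - g (br Y Z) X + g (br Z X) Y) / 2.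
Definition nabla (X Y : vec) : vec := \sum_k (eps k * koszul X Y (ev k)) *: ev k.

Definition nablaJ (X Y : vec) : vec := nabla X (J Y) - J (nabla X Y).

Definition nabla0 (X Y : vec) : vec := nabla X Y - (1/2) *: nablaJ X (J Y).
Definition nabla1 (X Y : vec) : vec :=
  nabla0 X Y - (1/4) *: (nablaJ Y (J X) - nablaJ (J Y) X).

Definition curv (N : vec -> vec -> vec) (X Y Z : vec) : vec :=
  N X (N Y Z) - N Y (N X Z) - N (br X Y) Z.
Definition rho N (X Y : vec) : R := \sum_k - (eps k * g (curv N X (ev k) Y) (ev k)).
Definition rhot N (X Y : vec) : R := (rho N X Y + rho N Y X) / 2.
(* the unique endomorphism with rhot N X Y = g (Ric N X) Y *)
Definition Ric N (X : vec) : vec := \sum_k (eps k * rhot N X (ev k)) *: ev k.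
Definition scal N : R := \sum_k eps k * rhot N (ev k) (ev k).

Definition derivation (D : 'M[R]_3) : Prop :=
  forall X Y : vec, D *m br X Y = br (D *m X) Y + br X (D *m Y).

Definition algebraic_schouten_soliton N (lam c : R) : Prop :=
  exists D : 'M[R]_3, derivation D /\
    forall X : vec, Ric N X = (scal N * lam + c) *: X + D *m X.

End G6.

(* Main.v *)
Require Import Defs.
From HB Require Import structures.
From mathcomp Require Import all_boot all_order all_algebra.
From mathcomp Require Import reals ring.
Import Order.TTheory GRing.Theory Num.Theory.
Local Open Scope ring_scope.
Set Implicit Arguments.
Unset Strict Implicit.

Lemma n12 : (i1 == i2) = false. Proof. by apply/eqP => /(congr1 val); rewrite /= !inordK. Qed.
Lemma n13 : (i1 == i3) = false. Proof. by apply/eqP => /(congr1 val); rewrite /= !inordK. Qed.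
Lemma n23 : (i2 == i3) = false. Proof. by apply/eqP => /(congr1 val); rewrite /= !inordK. Qed.
Lemma n21 : (i2 == i1) = false. Proof. by rewrite eq_sym n12. Qed.
Lemma n31 : (i3 == i1) = false. Proof. by rewrite eq_sym n13. Qed.
Lemma n32 : (i3 == i2) = false. Proof. by rewrite eq_sym n23. Qed.

Lemma ord3 (i : 'I_3) : i = i1 \/ i = i2 \/ i = i3.
Proof.
case: i => [[|[|[|n]]] Hn].
- by left; apply: val_inj; rewrite /= inordK.
- by right; left; apply: val_inj; rewrite /= inordK.
- by right; right; apply: val_inj; rewrite /= inordK.
- by [].
Qed.

Lemma sum3 (T : nmodType) (F : 'I_3 -> T) : \sum_(k < 3) F k = F i1 + F i2 + F i3.
Proof.
rewrite !big_ord_recr big_ord0 /= add0r.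
by congr (F _ + F _ + F _); apply/val_inj; rewrite /= inordK.
Qed.

Section S.
Variable R : realType.
Implicit Types X Y Z : vec R.

Definition mk (u v w : R) : vec R := u *: ev R i1 + v *: ev R i2 + w *: ev R i3.

Lemma coD X Y i : co (X + Y) i = co X i + co Y i. Proof. by rewrite /co mxE. Qed.
Lemma coN X i : co (- X) i = - co X i. Proof. by rewrite /co mxE. Qed.
Lemma coZ (a : R) X i : co (a *: X) i = a * co X i. Proof. by rewrite /co mxE. Qed.
Lemma co0 i : co (0 : vec R) i = 0. Proof. by rewrite /co mxE. Qed.
Lemma co_ev i j : co (ev R i) j = (j == i)%:R. Proof. by rewrite /co /ev mxE andbT. Qed.
Lemma coM (M : 'M[R]_3) X i :
  co (M *m X) i = M i i1 * co X i1 + M i i2 * co X i2 + M i i3 * co X i3.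
Proof. by rewrite /co mxE sum3. Qed.
Lemma tR : (true%:R : R) = 1. Proof. by []. Qed.
Lemma fR : (false%:R : R) = 0. Proof. by []. Qed.
Lemma eps1 : eps R i1 = 1. Proof. by rewrite /eps n13. Qed.
Lemma eps2 : eps R i2 = 1. Proof. by rewrite /eps n23. Qed.
Lemma eps3 : eps R i3 = -1. Proof. by rewrite /eps eqxx. Qed.

Ltac simp := rewrite ?(coD, coN, coZ, co0, co_ev, coM, eqxx, n12, n13, n21, n23, n31, n32,
   eps1, eps2, eps3, andbT, andbF, andTb, andFb, mxE, tR, fR).

Lemma co_mk1 u v w : co (mk u v w) i1 = u. Proof. rewrite /mk; simp; ring. Qed.
Lemma co_mk2 u v w : co (mk u v w) i2 = v. Proof. rewrite /mk; simp; ring. Qed.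
Lemma co_mk3 u v w : co (mk u v w) i3 = w. Proof. rewrite /mk; simp; ring. Qed.

Lemma vec_eq X Y : co X i1 = co Y i1 -> co X i2 = co Y i2 -> co X i3 = co Y i3 -> X = Y.
Proof.
move=> h1 h2 h3; apply/matrixP => i j; rewrite (ord1 j).
by case: (ord3 i) => [->|[->|->]].
Qed.

Lemma gE X Y : g X Y = co X i1 * co Y i1 + co X i2 * co Y i2 - co X i3 * co Y i3.
Proof. rewrite /g sum3 eps1 eps2 eps3; ring. Qed.

End S.

Ltac simp := rewrite ?(coD, coN, coZ, co0, co_ev, co_mk1, co_mk2, co_mk3, eqxx, n12, n13, n21, n23, n31, n32,
   eps1, eps2, eps3, andbT, andbF, andTb, andFb, tR, fR).

Section T.
Variable R : realType.
Variables al be ga de : R.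
Implicit Types X Y Z : vec R.

Lemma brE X Y : br al be ga de X Y =
  mk 0 (al * (co X i1 * co Y i2 - co X i2 * co Y i1) + ga * (co X i1 * co Y i3 - co X i3 * co Y i1))
       (be * (co X i1 * co Y i2 - co X i2 * co Y i1) + de * (co X i1 * co Y i3 - co X i3 * co Y i1)).
Proof. apply: vec_eq; rewrite /br; simp; ring. Qed.

Lemma JE X : J X = mk (co X i1) (co X i2) (- co X i3).
Proof. apply: vec_eq; rewrite /J; simp; ring. Qed.

Lemma koszulE X Y Z : koszul al be ga de X Y Z =
  (g (br al be ga de X Y) Z - g (br al be ga de Y Z) X + g (br al be ga de Z X) Y) / 2.
Proof. by []. Qed.

Lemma nablaE X Y : nabla al be ga de X Y =
  mk (al * co X i2 * co Y i2 + (ga - be) / 2 * (co X i2 * co Y i3 + co X i3 * co Y i2)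
        - de * co X i3 * co Y i3)
     (- (al * co X i2 * co Y i1) + (ga + be) / 2 * (co X i1 * co Y i3)
        + (be - ga) / 2 * (co X i3 * co Y i1))
     ((be + ga) / 2 * (co X i1 * co Y i2) + (ga - be) / 2 * (co X i2 * co Y i1)
        - de * co X i3 * co Y i1).
Proof.
apply: vec_eq; rewrite /nabla !sum3 !koszulE !gE !brE; simp; field; rewrite ?pnatr_eq0 //.
Qed.

Lemma nabla1E X Y : nabla1 al be ga de X Y =
  mk (al * co X i2 * co Y i2) (- (al * co X i2 * co Y i1) - ga * co X i3 * co Y i1)
     (de * co X i1 * co Y i3).
Proof.
apply: vec_eq; rewrite /nabla1 /nabla0 /nablaJ !nablaE !JE; simp; field; rewrite ?pnatr_eq0 //.
Qed.

End T.

Section T.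
Variable R : realType.
Variables al be ga de : R.
Implicit Types X Y Z : vec R.
Lemma curvE X Y Z : curv al be ga de (nabla1 al be ga de) X Y Z =
  mk (- al * ga * co X i2 * co Y i3 * co Z i1 + al * ga * co X i3 * co Y i2 * co Z i1 - al ^+ 2 * co X i1 * co Y i2 * co Z i2 + al ^+ 2 * co X i2 * co Y i1 * co Z i2 - al * ga * co X i1 * co Y i3 * co Z i2 + al * ga * co X i3 * co Y i1 * co Z i2)
  (- al * ga * co X i3 * co Y i2 * co Z i2 + al * ga * co X i2 * co Y i3 * co Z i2 + al ^+ 2 * co X i1 * co Y i2 * co Z i1 - al ^+ 2 * co X i2 * co Y i1 * co Z i1 + al * ga * co X i1 * co Y i3 * co Z i1 - al * ga * co X i3 * co Y i1 * co Z i1 + be * ga * co X i1 * co Y i2 * co Z i1 - be * ga * co X i2 * co Y i1 * co Z i1 + de * ga * co X i1 * co Y i3 * co Z i1 - de * ga * co X i3 * co Y i1 * co Z i1)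
  0.
Proof.
apply: vec_eq; rewrite /curv !nabla1E !brE; simp; ring.
Qed.

Lemma rhoE X Y : rho al be ga de (nabla1 al be ga de) X Y =
  - (al ^+ 2 + be * ga) * co X i1 * co Y i1 - al ^+ 2 * co X i2 * co Y i2.
Proof.
rewrite /rho sum3 (curvE X (ev R i1) Y) (curvE X (ev R i2) Y) (curvE X (ev R i3) Y) !gE; simp; ring.
Qed.

Lemma rhotE X Y : rhot al be ga de (nabla1 al be ga de) X Y =
  - (al ^+ 2 + be * ga) * co X i1 * co Y i1 - al ^+ 2 * co X i2 * co Y i2.
Proof.
rewrite /rhot !rhoE; field; rewrite ?pnatr_eq0 //.
Qed.

Lemma RicE X : Ric al be ga de (nabla1 al be ga de) X =
  mk (- (al ^+ 2 + be * ga) * co X i1) (- al ^+ 2 * co X i2) 0.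
Proof.
apply: vec_eq; rewrite /Ric sum3 (rhotE X (ev R i1)) (rhotE X (ev R i2)) (rhotE X (ev R i3)); simp; ring.
Qed.

Lemma scalE : scal al be ga de (nabla1 al be ga de) = - 2 * al ^+ 2 - be * ga.
Proof.
rewrite /scal sum3 (rhotE (ev R i1) (ev R i1)) (rhotE (ev R i2) (ev R i2)) (rhotE (ev R i3) (ev R i3)); simp; ring.
Qed.
End T.

Unset Implicit Arguments.

Lemma comb1 (R : realType) (x y t u : R) : x = y -> t = u * (y - x) -> t = 0.
Proof. by move=> -> ->; rewrite subrr mulr0. Qed.
Lemma comb2 (R : realType) (x y z w t u v : R) :
  x = y -> z = w -> t = u * (y - x) + v * (w - z) -> t = 0.
Proof. by move=> -> -> ->; rewrite !subrr !mulr0 addr0. Qed.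

Theorem theorem4p13 (R : realType) (al be ga de lam c : R) :
  al + de != 0 -> al * ga - be * de = 0 ->
  (algebraic_schouten_soliton al be ga de (nabla1 al be ga de) lam c <->
   (al = 0 /\ be = 0 /\ de != 0 /\ c = 0) \/
   (al != 0 /\ be = 0 /\ ga = 0 /\ al + de != 0 /\
    c = - al ^+ 2 + 2 * al ^+ 2 * lam)).
Proof.
move=> had hrel.
rewrite /algebraic_schouten_soliton scalE.
set k := (-2 * al ^+ 2 - be * ga) * lam + c.
split.
- case=> D [Hder HR].
  have HD : forall X, D *m X = Ric al be ga de (nabla1 al be ga de) X - k *: X.
    by move=> X; rewrite HR addrAC subrr add0r.
  have E12 := Hder (ev R i1) (ev R i2).
  have E13 := Hder (ev R i1) (ev R i3).
  rewrite (HD (br al be ga de (ev R i1) (ev R i2))) (HD (ev R i1)) (HD (ev R i2)) in E12.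
  rewrite (HD (br al be ga de (ev R i1) (ev R i3))) (HD (ev R i1)) (HD (ev R i3)) in E13.
  have e1 := congr1 (fun v => co v i2) E12.
  have e2 := congr1 (fun v => co v i3) E12.
  have e3 := congr1 (fun v => co v i2) E13.
  have e4 := congr1 (fun v => co v i3) E13.
  move: e1 e2 e3 e4 => /=.
  rewrite !RicE !brE; simp => e1 e2 e3 e4.
  have hp : - (al ^+ 2 + be * ga) - k = 0.
    have : (al + de) * (- (al ^+ 2 + be * ga) - k) = 0.
      by apply: (@comb2 R _ _ _ _ _ (1) (1) e1 e4); ring.
    by move/eqP; rewrite mulf_eq0 (negbTE had) orFb => /eqP.
  have hb : be * al ^+ 2 = 0.
    by apply: (@comb2 R _ _ _ _ _ (-1) (- be) e2 hp); ring.
  have hg : ga * al ^+ 2 = 0.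
    by apply: (@comb2 R _ _ _ _ _ (1) (ga) e3 hp); ring.
  case: (eqVneq al 0) => [a0|a0].
  + left.
    have d0 : de != 0 by move: had; rewrite a0 add0r.
    have b0 : be = 0.
      move: hrel; rewrite a0 mul0r sub0r => /eqP; rewrite oppr_eq0 mulf_eq0 (negbTE d0) orbF.
      by move/eqP.
    do 3 (split => //).
    by apply: (@comb1 R _ _ _ (1) hp); rewrite /k a0 b0; ring.
  + right.
    have b0 : be = 0.
      by move: hb => /eqP; rewrite mulf_eq0 expf_eq0 (negbTE a0) andbF orbF => /eqP.
    have g0 : ga = 0.
      by move: hg => /eqP; rewrite mulf_eq0 expf_eq0 (negbTE a0) andbF orbF => /eqP.
    do 4 (split => //).
    apply/eqP; rewrite -subr_eq0; apply/eqP.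
    by apply: (@comb1 R _ _ _ (1) hp); rewrite /k b0 g0; ring.
- case=> [[a0 [b0 [d0 c0]]] | [a0 [b0 [g0 [_ c0]]]]].
  + exists 0; split.
    * move=> X Y; rewrite !mul0mx; apply: vec_eq; rewrite !brE; simp; ring.
    * move=> X; rewrite RicE mul0mx addr0; apply: vec_eq; simp; rewrite /k a0 b0 c0; ring.
  + exists (\matrix_(i, j) (((i == i3) && (j == i3))%:R * al ^+ 2)); split.
    * move=> X Y; apply: vec_eq; rewrite !brE !coM !mxE; simp; rewrite b0 g0; ring.
    * move=> X; rewrite RicE; apply: vec_eq; rewrite !coD !coZ !coM !mxE; simp;
        rewrite /k b0 g0 c0; ring.
Qed.
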